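(* Let $d\in\{2,3\}$, let $D\in\mathbb{R}^{d\times m}$ and consider a TPS warp with control centers $c_1,\dots,c_l\in\mathbb{R}^d$ and parameter $\lambda$. Let $R\in\mathbb{R}^{d\times d}$ be a rotation and $t\in\mathbb{R}^d$, and apply the same rigid transformation to the datum shape and to the control centers: $D'=RD+t\mathbf{1}^{\top}$ and $c_j'=Rc_j+t$. Denote by $\mathcal{B}(\cdot)$, $Z$ the TPS feature lifting and regularization matrix built from $c_1,\dots,c_l$, and by $\mathcal{B}'(\cdot)$, $Z'$ those built from $c_1',\dots,c_l'$ (same $\lambda$). Then $\mathcal{B}'(D')=\mathcal{B}(D)$ and $Z'=Z$.
   Context: TPS construction: kernel $\phi(r)=r^2\log(r^2)$ ($d=2$) or $\phi(r)=-|r|$ ($d=3$); $K_\lambda\in\mathbb{R}^{l\times l}$ has diagonal entries $\lambda$ and off-diagonal entries $\phi(\|c_j-c_k\|)$; $\tilde{C}=[\tilde{c}_1,\dots,\tilde{c}_l]$ with $\tilde{c}_j=[c_j^{\top},1]^{\top}$; $K_\lambda$ and $\tilde{C}K_\lambda^{-1}\tilde{C}^{\top}$ are assumed invertible; $\bar{\mathcal{E}}_\lambda=K_\lambda^{-1}-K_\lambda^{-1}\tilde{C}^{\top}(\tilde{C}K_\lambda^{-1}\tilde{C}^{\top})^{-1}\tilde{C}K_\lambda^{-1}$ (bending energy matrix, positive semidefinite in the paper's setting) and $\mathcal{E}_\lambda=\begin{bmatrix}\bar{\mathcal{E}}_\lambda\\ (\tilde{C}K_\lambda^{-1}\tilde{C}^{\top})^{-1}\tilde{C}K_\lambda^{-1}\end{bmatrix}$;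 for $p\in\mathbb{R}^d$, $\beta(p)=\mathcal{E}_\lambda^{\top}\begin{bmatrix}\phi_p\\ \tilde{p}\end{bmatrix}$ with $\phi_p=[\phi(\|p-c_j\|)]_{j=1}^l$ and $\tilde{p}=[p^{\top},1]^{\top}$; $\mathcal{B}(D)=[\beta(p_1),\dots,\beta(p_m)]$ for $D=[p_1,\dots,p_m]$; $Z=\sqrt{\bar{\mathcal{E}}_\lambda}$ is the symmetric positive semidefinite square root. $\mathbf{1}\in\mathbb{R}^m$ is the all-ones vector. *)

(* Defs.v *)
From HB Require Import structures.
From mathcomp Require Import all_boot all_order all_algebra.
From mathcomp Require Import boolp classical_sets reals exp.
Set Implicit Arguments. Unset Strict Implicit. Unset Printing Implicit Defensive.
Import Order.TTheory GRing.Theory Num.Theory.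
Local Open Scope ring_scope.

(* TPS kernel: phi(r) = r^2 log(r^2) if d = 2, and -|r| otherwise (d = 3).
   At r = 0 the first gives 0 (ln 0 = 0 in mathcomp-analysis, and the usual
   convention 0 log 0 = 0). *)
Definition tps_phi (R : realType) (d : nat) (r : R) : R :=
  if d == 2%N then r ^+ 2 * ln (r ^+ 2) else - `|r|.

Definition enorm (R : realType) (n : nat) (v : 'cV[R]_n) : R :=
  Num.sqrt (\sum_(i < n) v i 0 ^+ 2).

Definition Klam (R : realType) (d l : nat) (C : 'M[R]_(d, l)) (lam : R)
  : 'M[R]_l :=
  \matrix_(j, k) if j == k then lam else tps_phi d (enorm (col j C - col k C)).

Definition Ctil (R : realType) (d l : nat) (C : 'M[R]_(d, l)) : 'M[R]_(d + 1, l) :=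
  col_mx C (const_mx 1).

Definition Mlam (R : realType) (d l : nat) (C : 'M[R]_(d, l)) (lam : R)
  : 'M[R]_(d + 1) :=
  Ctil C *m invmx (Klam C lam) *m (Ctil C)^T.

Definition Ebar (R : realType) (d l : nat) (C : 'M[R]_(d, l)) (lam : R)
  : 'M[R]_l :=
  invmx (Klam C lam)
  - invmx (Klam C lam) *m (Ctil C)^T *m invmx (Mlam C lam) *m Ctil C
      *m invmx (Klam C lam).

Definition Elam (R : realType) (d l : nat) (C : 'M[R]_(d, l)) (lam : R)
  : 'M[R]_(l + (d + 1), l) :=
  col_mx (Ebar C lam) (invmx (Mlam C lam) *m Ctil C *m invmx (Klam C lam)).

Definition phivec (R : realType) (d l : nat) (C : 'M[R]_(d, l)) (p : 'cV[R]_d)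
  : 'cV[R]_l :=
  \col_j tps_phi d (enorm (p - col j C)).

Definition tps_beta (R : realType) (d l : nat) (C : 'M[R]_(d, l)) (lam : R)
  (p : 'cV[R]_d) : 'cV[R]_l :=
  (Elam C lam)^T *m col_mx (phivec C p) (col_mx p (const_mx 1 : 'cV[R]_1)).

Definition tps_B (R : realType) (d l m : nat) (C : 'M[R]_(d, l)) (lam : R)
  (D : 'M[R]_(d, m)) : 'M[R]_(l, m) :=
  \matrix_(i, k) tps_beta C lam (col k D) i 0.

Definition psd (R : realType) (n : nat) (A : 'M[R]_n) : Prop :=
  forall v : 'cV[R]_n, 0 <= (v^T *m A *m v) 0 0.

(* the symmetric positive semidefinite square root (chosen by choice among
   the symmetric psd Z with Z Z = E; such Z is unique when it exists) *)
Definition psd_sqrt (R : realType) (n : nat) (E : 'M[R]_n) : 'M[R]_n :=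
  xget 0 [set Z : 'M[R]_n | Z^T = Z /\ psd Z /\ Z *m Z = E].

Definition tps_Z (R : realType) (d l : nat) (C : 'M[R]_(d, l)) (lam : R)
  : 'M[R]_l := psd_sqrt (Ebar C lam).

(* Main.v *)
Require Import Defs.
From HB Require Import structures.
From mathcomp Require Import all_boot all_order all_algebra.
From mathcomp Require Import boolp classical_sets reals exp.
Import Order.TTheory GRing.Theory Num.Theory.
Local Open Scope ring_scope.

Lemma sum_sq (R : realType) n (v : 'cV[R]_n) :
  \sum_(i < n) v i 0 ^+ 2 = (v^T *m v) 0 0.
Proof. by rewrite !mxE; apply: eq_bigr => i _; rewrite !mxE expr2. Qed.

Lemma enormQ (R : realType) n (Q : 'M[R]_n) (v : 'cV[R]_n) :
  Q^T *m Q = 1%:M -> enorm (Q *m v) = enorm v.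
Proof.
move=> hQ; rewrite /enorm !sum_sq trmx_mul -mulmxA (mulmxA Q^T) hQ mul1mx.
by [].
Qed.

Lemma colC' (R : realType) d l (Q : 'M[R]_d) (C : 'M[R]_(d, l)) t j :
  col j (Q *m C + t *m (const_mx 1 : 'rV[R]_l)) = Q *m col j C + t.
Proof.
apply/matrixP => i k; rewrite (ord1 k) !mxE big_ord1 !mxE mulr1; congr (_ + _).
by apply: eq_bigr => x _; rewrite !mxE.
Qed.

Lemma mulmxBr_t (R : realType) d n (Q : 'M[R]_d) (a b t : 'M[R]_(d, n)) :
  (Q *m a + t) - (Q *m b + t) = Q *m (a - b).
Proof. by rewrite mulmxBr opprD addrACA subrr addr0. Qed.

Lemma KlamC' (R : realType) d l (Q : 'M[R]_d) (C : 'M[R]_(d, l)) t lam :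
  Q^T *m Q = 1%:M ->
  Klam (Q *m C + t *m (const_mx 1 : 'rV[R]_l)) lam = Klam C lam.
Proof.
move=> hQ; apply/matrixP => j k; rewrite !mxE !colC'.
by rewrite mulmxBr_t enormQ.
Qed.

Lemma phivecC' (R : realType) d l (Q : 'M[R]_d) (C : 'M[R]_(d, l)) t p :
  Q^T *m Q = 1%:M ->
  phivec (Q *m C + t *m (const_mx 1 : 'rV[R]_l)) (Q *m p + t) = phivec C p.
Proof.
move=> hQ; apply/matrixP => j k; rewrite !mxE !colC'.
by rewrite mulmxBr_t enormQ.
Qed.

Definition Ablk {R : realType} {d} (Q : 'M[R]_d) (t : 'cV[R]_d) : 'M[R]_(d + 1) :=
  block_mx Q t 0 1%:M.

Lemma CtilC' (R : realType) d l (Q : 'M[R]_d) (C : 'M[R]_(d, l)) t :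
  Ctil (Q *m C + t *m (const_mx 1 : 'rV[R]_l)) = Ablk Q t *m Ctil C.
Proof.
rewrite /Ctil /Ablk mul_block_col mul0mx mul1mx add0r; congr col_mx.
Qed.

Lemma invmxM' (R : realType) n (X Y : 'M[R]_n) :
  X \in unitmx -> Y \in unitmx -> invmx (X *m Y) = invmx Y *m invmx X.
Proof.
move=> hX hY; have hXY : X *m Y \in unitmx by rewrite unitmx_mul hX hY.
rewrite -[RHS]mul1mx -(mulVmx hXY) -!mulmxA (mulmxA Y) (mulmxV hY) mul1mx.
by rewrite (mulmxV hX) mulmx1.
Qed.

Lemma Ablk_unit (R : realType) d (Q : 'M[R]_d) t :
  \det Q = 1 -> Ablk Q t \in unitmx.
Proof. by move=> hQ; rewrite unitmxE /Ablk det_ublock hQ det1 mulr1 unitr1. Qed.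

Lemma const11 (R : realType) d (t : 'cV[R]_d) : t *m (const_mx 1 : 'M[R]_1) = t.
Proof. by apply/matrixP => i k; rewrite (ord1 k) !mxE big_ord1 !mxE mulr1. Qed.

Lemma pt_tilde (R : realType) d (Q : 'M[R]_d) t (p : 'cV[R]_d) :
  col_mx (Q *m p + t) (const_mx 1 : 'cV[R]_1) = Ablk Q t *m col_mx p (const_mx 1).
Proof. by rewrite /Ablk mul_block_col mul0mx mul1mx add0r const11. Qed.

Theorem proposition9 (R : realType) (d m l : nat) (hd : d = 2%N \/ d = 3%N)
  (lam : R) (C : 'M[R]_(d, l)) (D : 'M[R]_(d, m))
  (Q : 'M[R]_d) (t : 'cV[R]_d)
  (hQorth : Q^T *m Q = 1%:M) (hQdet : \det Q = 1)
  (hK : Klam C lam \in unitmx) (hM : Mlam C lam \in unitmx) :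
  let D' := Q *m D + t *m (const_mx 1 : 'rV[R]_m) in
  let C' := Q *m C + t *m (const_mx 1 : 'rV[R]_l) in
  tps_B C' lam D' = tps_B C lam D /\ tps_Z C' lam = tps_Z C lam.
Proof.
move=> D' C'.
set A := Ablk Q t.
have hA : A \in unitmx by exact: Ablk_unit.
have hAT : A^T \in unitmx by rewrite unitmx_tr.
have eK : Klam C' lam = Klam C lam by exact: KlamC'.
have eC : Ctil C' = A *m Ctil C by exact: CtilC'.
have eM : Mlam C' lam = A *m Mlam C lam *m A^T.
  by rewrite /Mlam eK eC trmx_mul !mulmxA.
have eMi : invmx (Mlam C' lam) = invmx A^T *m invmx (Mlam C lam) *m invmx A.
  rewrite eM invmxM' ?unitmx_mul ?hA ?hM // invmxM' //.
  by rewrite mulmxA.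
have eE : Ebar C' lam = Ebar C lam.
  rewrite /Ebar eK eMi eC trmx_mul -!mulmxA; congr (_ - _ *m _).
  by rewrite (mulmxA A^T) (mulmxV hAT) mul1mx (mulmxA (invmx A)) (mulVmx hA) mul1mx.
split; last by rewrite /tps_Z eE.
apply/matrixP => i k; rewrite mxE [RHS]mxE; congr (fun_of_matrix _ i 0).
rewrite /D' colC' /tps_beta phivecC' //.
rewrite pt_tilde -/A; clearbody A.
rewrite /Elam eE eMi eC eK (tr_col_mx (Ebar C lam)) (tr_col_mx (Ebar C lam)) !mul_row_col; congr (_ + _).
rewrite !trmx_mul !trmx_inv trmxK -!mulmxA; do 2 congr (_ *m _).
by rewrite (mulmxA A^T) (mulmxV hAT) mul1mx (mulmxA (invmx A)) (mulVmx hA) mul1mx.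
Qed.
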